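(* For every bipartite graph $G$ there is a bipartite graph $H$ such that $\mathrm{Ind}(H)$ is vertex-decomposable and the $h$-vector of $\mathrm{Ind}(H)$ (with trailing zeros removed) equals the face vector of $\mathrm{Ind}(G)$.
   Context: $\mathrm{Ind}(G)$ is the simplicial complex of independent sets of $G$. Face vector of a $(d-1)$-dimensional complex: $(f_{-1},\ldots,f_{d-1})$, $f_i$ = number of faces with $i+1$ elements; $h$-vector: $(h_0,\ldots,h_d)$, $h_j=\sum_{i=0}^{j}(-1)^{j-i}\binom{d-i}{j-i}f_{i-1}$. A pure complex $\Delta$ is vertex-decomposable if it is a simplex or has a vertex $v$ with $\mathrm{link}_\Delta v=\{\tau\in\Delta: v\notin\tau,\ \tau\cup\{v\}\in\Delta\}$ and $\mathrm{del}_\Delta v=\{\tau\in\Delta: v\notin\tau\}$ both pure and vertex-decomposable. *)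

(* Defs.v *)
From HB Require Import structures.
From mathcomp Require Import all_boot all_order all_algebra.
Set Implicit Arguments. Unset Strict Implicit. Unset Printing Implicit Defensive.
Import GRing.Theory Num.Theory.

Section Defs.
Variable T : finType.

Definition simple_graph (e : rel T) : Prop := irreflexive e /\ symmetric e.

Definition bipartite (e : rel T) : Prop :=
  exists c : T -> bool, forall x y, e x y -> c x != c y.

Definition independent (e : rel T) (A : {set T}) : bool :=
  [forall x in A, forall y in A, ~~ e x y].

Definition Ind (e : rel T) : {set {set T}} := [set A | independent e A].

(* d = (dimension + 1) = maximal size of a face. *)
Definition cdim (D : {set {set T}}) : nat := \max_(A in D) #|A|.

(* number of faces with exactly k elements, i.e. f_{k-1} *)
Definition nfaces (D : {set {set T}}) (k : nat) : nat :=
  #|[set A in D | #|A| == k]|.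

(* face vector (f_{-1}, ..., f_{d-1}) *)
Definition face_vector (D : {set {set T}}) : seq nat :=
  [seq nfaces D k | k <- iota 0 (cdim D).+1].

Definition h_vector (D : {set {set T}}) : seq int :=
  let d := cdim D in
  [seq (\sum_(i < j.+1)
          (-1) ^+ (j - i) * ('C(d - i, j - i))%:Z * (nfaces D i)%:Z)%R
   | j <- iota 0 d.+1].

Definition facet (D : {set {set T}}) (A : {set T}) : Prop :=
  A \in D /\ forall B, B \in D -> A \subset B -> B = A.

Definition pure (D : {set {set T}}) : Prop :=
  forall A B, facet D A -> facet D B -> #|A| = #|B|.

Definition link (D : {set {set T}}) (v : T) : {set {set T}} :=
  [set t in D | (v \notin t) && (v |: t \in D)].

Definition del (D : {set {set T}}) (v : T) : {set {set T}} :=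
  [set t in D | v \notin t].

Inductive vertex_decomposable : {set {set T}} -> Prop :=
| vd_simplex (S : {set T}) : vertex_decomposable (powerset S)
| vd_step (D : {set {set T}}) (v : T) :
    pure D -> [set v] \in D ->
    pure (link D v) -> pure (del D v) ->
    vertex_decomposable (link D v) -> vertex_decomposable (del D v) ->
    vertex_decomposable D.

End Defs.

Definition strip0 (s : seq int) : seq int :=
  rev (drop (find (fun x => x != 0%R) (rev s)) (rev s)).

(* Main.v *)
Require Import Defs.
From mathcomp Require Import all_boot all_order all_algebra.
Set Implicit Arguments. Unset Strict Implicit. Unset Printing Implicit Defensive.
From Stdlib Require Import Arith Lia.
Import GRing.Theory.
Lemma binC a c i : i <= c -> c <= a -> 'C(a-i, c-i) * 'C(a,i) = 'C(a,c) * 'C(c,i).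
Proof.
move=> ic ca.
have ia : i <= a by apply: leq_trans ca.
have e1 : a - i - (c - i) = a - c.
  by move/leP: ic => ic'; move/leP: ca => ca'; rewrite -!minusE; lia.
have h1 := bin_fact (leq_sub2r i ca); rewrite e1 in h1.
have h2 := bin_fact ia.
have h3 := bin_fact ic.
have h4 := bin_fact ca.
apply/eqP; rewrite -(@eqn_pmul2r (i`! * (c-i)`! * (a-c)`!)); last by rewrite !muln_gt0 !fact_gt0.
apply/eqP.
set X := 'C(a-i, c-i) in h1 *; set Y := 'C(a, i) in h2 *; set Z := 'C(a, c) in h4 *;
set V := 'C(c, i) in h3 *.
set fi := i`! in h2 h3 *; set fci := (c-i)`! in h1 h3 *; set fac := (a-c)`! in h1 h4 *.
set fai := (a-i)`! in h1 h2 *.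
have -> : X * Y * (fi * fci * fac) = Y * (fi * (X * (fci * fac))) by rewrite -!multE; ring.
have -> : Z * V * (fi * fci * fac) = Z * ((V * (fi * fci)) * fac) by rewrite -!multE; ring.
by rewrite h1 h3 h2 h4.
Qed.

Local Open Scope ring_scope.
Lemma signsum c : \sum_(i < c.+1) (-1) ^+ (c - i) * ('C(c, i))%:Z = (c == 0)%N%:Z.
Proof.
have := exprBn (-1 : int) (-1) c; rewrite subrr expr0n => E.
rewrite -natz E; apply: eq_bigr => i _.
rewrite -[X in _ * X]natz mulr_natr; congr (_ *+ _).
by rewrite mulrAC -mulrA signrMK.
Qed.

Lemma binv (d k j : nat) : (k <= d)%N -> (j <= d)%N ->
  \sum_(i < j.+1) (-1) ^+ (j - i) * ('C(d - i, j - i))%:Z * ('C(d - k, i - k) * (k <= i))%:Z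
  = (j == k)%:Z.
Proof.
move=> kd jd.
case: (ltnP j k) => jk.
  rewrite (ltn_eqF jk) big1 // => i _.
  have -> : (k <= i)%N = false by apply/negbTE; rewrite -ltnNge; apply: leq_ltn_trans jk; rewrite -ltnS.
  by rewrite muln0 mulr0.
pose F (i : nat) : int := (-1) ^+ (j - i) * ('C(d - i, j - i))%:Z * ('C(d - k, i - k) * (k <= i))%:Z.
rewrite (_ : \sum_(i < j.+1) _ = \sum_(i < j.+1) F i) //.
rewrite -(big_mkord (fun _ => true) F) (@big_cat_nat _ _ _ k) ?leqW //=.
rewrite [X in X + _]big_nat_cond big1 ?add0r; last first.
  by move=> i /andP [/andP [_ ik] _]; rewrite /F leqNgt ik muln0 mulr0.
rewrite -{1}[k]add0n big_addn.
set a := (d - k)%N; set c := (j - k)%N.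
have -> : (j.+1 - k = c.+1)%N by rewrite subSn.
rewrite big_mkord.
have ca : (c <= a)%N by rewrite leq_sub2r.
transitivity (\sum_(i < c.+1) ('C(a, c))%:Z * ((-1) ^+ (c - i) * ('C(c, i))%:Z)).
  apply: eq_bigr => i _.
  have ic : (i <= c)%N by rewrite -ltnS. rewrite /F.
  have -> : (j - (i + k) = c - i)%N by rewrite /c addnC subnDA.
  have -> : (d - (i + k) = a - i)%N by rewrite /a addnC subnDA.
  rewrite addnK leq_addl muln1 -/a -mulrA -PoszM binC // PoszM.
  by rewrite mulrCA.
rewrite -mulr_sumr signsum.
have -> : (c == 0)%N = (j == k).
  by rewrite /c subn_eq0 eqn_leq jk andbT.
by case: eqP => [E|_]; rewrite ?mulr0 // /c E subnn bin0 mulr1.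
Qed.
Close Scope ring_scope.

Section Whisker.
Variables (T : finType) (e : rel T) (O : {set T}) (p : T -> T).
Hypothesis e_irr : irreflexive e.
Hypothesis e_sym : symmetric e.
Hypothesis pK : involutive p.
Hypothesis pO : forall x, (p x \in O) = (x \notin O).
Hypothesis pe : forall x, x \in O -> forall y, e (p x) y = (y == x).

Lemma indepP (A : {set T}) : reflect (forall x y, x \in A -> y \in A -> ~~ e x y) (independent e A).
Proof.
apply: (iffP forall_inP) => [H x y xA yA | H x xA].
  by move/forall_inP: (H x xA) => /(_ y yA).
by apply/forall_inP => y yA; apply: H.
Qed.

Lemma ne (y : T) : y \notin O -> forall z, e y z = (z == p y).
Proof. by move=> yO z; rewrite -{1}(pK y) pe // pO. Qed.

Lemma nOnO x y : x \notin O -> y \notin O -> ~~ e x y.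
Proof. by move=> xO yO; rewrite ne //; apply/eqP => E; move: yO; rewrite E pO xO. Qed.

Definition D (S : {set T}) := [set A in Ind e | A \subset S].

Lemma inD S (A : {set T}) : (A \in D S) = independent e A && (A \subset S).
Proof. by rewrite !inE. Qed.

Lemma del_D (S : {set T}) v : del (D S) v = D (S :\ v).
Proof. by apply/setP => t; rewrite !inE subsetD1 andbA. Qed.

Definition N (v : T) := v |: [set y | e v y].

Lemma link_D (S : {set T}) v : v \in S -> link (D S) v = D (S :\: N v).
Proof.
move=> vS; apply/setP => t; rewrite inE !inD subsetD.
apply/idP/idP.
  case/and4P => /andP [It tS] vt Ivt _; rewrite It tS /=.
  apply/pred0P => y /=; rewrite !inE; apply/negbTE; rewrite negb_and.
  case yt: (y \in t) => //=; rewrite negb_or; apply/andP; split.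
    by apply: contraNneq vt => <-.
  by move/indepP: Ivt => /(_ v y); rewrite setU11 setU1r //; apply.
case/and3P => It tS /pred0P dj.
have vt : v \notin t by apply/negP => vt; move: (dj v); rewrite /= !inE eqxx vt.
rewrite It tS vt /= subUset sub1set vS tS !andbT.
apply/indepP => x y; rewrite !inE => /predU1P [-> | xt] /predU1P [-> | yt].
- by rewrite e_irr.
- by apply/negP => evy; move: (dj y); rewrite /= !inE evy yt orbT.
- by rewrite e_sym; apply/negP => evy; move: (dj x); rewrite /= !inE evy xt orbT.
- by move/indepP: It; apply.
Qed.


Definition Inv (S : {set T}) := forall x, x \in S -> x \in O -> p x \in S.

Lemma p_inj : injective p. Proof. exact: inv_inj. Qed.

Lemma facet_card (S F : {set T}) : Inv S -> facet (D S) F -> #|F| = #|S :\: O|.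
Proof.
move=> HS [FD Fmax]; move: (FD); rewrite inD => /andP [IF FS].
pose phi z := if z \in O then p z else z.
have eqS : S :\: O = phi @: F.
  apply/setP => y; apply/idP/imsetP.
    rewrite !inE => /andP [yO yS].
    case yF: (y \in F); first by exists y => //; rewrite /phi (negbTE yO).
    case xF: (p y \in F).
      by exists (p y) => //; rewrite /phi pO yO pK.
    have : y |: F \in D S.
      rewrite inD subUset sub1set yS FS !andbT; apply/indepP => a b.
      have H1 : forall z, z \in F -> ~~ e y z.
        by move=> z zF; rewrite ne //; apply/eqP => E; move: xF; rewrite -E zF.
      rewrite !inE => /predU1P [-> | aF] /predU1P [-> | bF].
      - by rewrite e_irr.
      - exact: H1.
      - by rewrite e_sym; apply: H1.
      - by move/indepP: IF; apply.
    move/Fmax => /(_ (subsetUr _ _)) E; move: yF; by rewrite -E setU11.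
  case=> z zF ->; rewrite /phi; have zS := subsetP FS z zF.
  case zO: (z \in O); rewrite !inE.
    by rewrite pO zO HS.
  by rewrite zO zS.
rewrite eqS card_in_imset //.
have H2 : forall a b, a \in F -> b \in F -> a \in O -> b \notin O -> p a = b -> False.
  move=> a b aF bF aO bO E; move/indepP: IF => /(_ (p a) a).
  by rewrite pe // eqxx E => /(_ bF aF).
move=> a b aF bF; rewrite /phi.
case aO: (a \in O); case bO: (b \in O).
- exact: p_inj.
- by move=> E; case: (H2 a b aF bF aO (negbT bO) E).
- by move=> E; case: (H2 b a bF aF bO (negbT aO) (esym E)).
- by [].
Qed.

Lemma pure_D S : Inv S -> pure (D S).
Proof. by move=> HS A B fA fB; rewrite (facet_card HS fA) (facet_card HS fB). Qed.

Lemma Inv_del S v : Inv S -> v \in O -> Inv (S :\ v).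
Proof.
move=> HS vO x; rewrite !inE => /andP [xv xS] xO; rewrite HS // andbT.
by apply: contraTneq vO => <-; rewrite pO xO.
Qed.

Lemma Inv_link S v : Inv S -> v \in O -> Inv (S :\: N v).
Proof.
move=> HS vO x; rewrite !inE negb_or => /andP [/andP [xv nexv] xS] xO.
rewrite HS // andbT negb_or; apply/andP; split.
  by apply: contraTneq vO => <-; rewrite pO xO.
by rewrite e_sym pe // eq_sym.
Qed.

Lemma D_simplex S : S :&: O = set0 -> D S = powerset S.
Proof.
move=> SO; apply/setP => A; rewrite inD inE.
case AS: (A \subset S); rewrite ?andbF ?andbT //.
have nO : forall x, x \in A -> x \notin O.
  move=> x xA; apply/negP => xO.
  by move: (in_set0 x); rewrite -SO inE (subsetP AS x xA) xO.
by apply/indepP => x y xA yA; apply: nOnO; apply: nO.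
Qed.

Lemma vd_D k S : #|S :&: O| <= k -> Inv S -> vertex_decomposable (D S).
Proof.
elim: k S => [|k IH] S.
  by rewrite leqn0 cards_eq0 => /eqP SO _; rewrite D_simplex //; apply: vd_simplex.
move=> Sk HS.
case: (set_0Vmem (S :&: O)) => [SO | [v]].
  by rewrite D_simplex //; apply: vd_simplex.
rewrite inE => /andP [vS vO].
have lt1 : #|(S :\ v) :&: O| <= k.
  rewrite -ltnS; apply: leq_trans Sk.
  rewrite (cardsD1 v (S :&: O)) inE vS vO add1n ltnS.
  by apply: subset_leq_card; apply/subsetP => x; rewrite !inE andbA.
have lt2 : #|(S :\: N v) :&: O| <= k.
  apply: leq_trans lt1; apply: subset_leq_card; apply/subsetP => x.
  rewrite !inE negb_or => /andP [/andP [/andP [-> _] ->] ->] //.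
apply: (vd_step (v:=v)).
- exact: pure_D.
- by rewrite inD sub1set vS andbT; apply/indepP => x y; rewrite !inE => /eqP -> /eqP ->; rewrite e_irr.
- by rewrite link_D //; apply: pure_D; apply: Inv_link.
- by rewrite del_D; apply: pure_D; apply: Inv_del.
- by rewrite link_D //; apply: IH => //; apply: Inv_link.
- by rewrite del_D; apply: IH => //; apply: Inv_del.
Qed.

Lemma D_setT : D setT = Ind e.
Proof. by apply/setP => A; rewrite inD inE subsetT andbT. Qed.

Lemma vd_Ind : vertex_decomposable (Ind e).
Proof. rewrite -D_setT; apply: (@vd_D #|[set: T] :&: O|) => // x _ _; exact: in_setT. Qed.


Definition d := #|~: O|.
Definition IO := [set A in Ind e | A \subset O].

Lemma indep_pair (F : {set T}) a : independent e F -> a \in F -> a \in O -> p a \notin F.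
Proof.
move=> IF aF aO; apply/negP => paF.
by move/indepP: IF => /(_ (p a) a paF aF); rewrite pe // eqxx.
Qed.

Lemma face_le (F : {set T}) : independent e F -> #|F| <= d.
Proof.
move=> IF; pose phi z := if z \in O then p z else z.
rewrite -(@card_in_imset _ _ phi F).
  apply: subset_leq_card; apply/subsetP => y /imsetP [z zF ->].
  by rewrite /phi inE; case zO: (z \in O); rewrite ?pO zO.
move=> a b aF bF; rewrite /phi.
case aO: (a \in O); case bO: (b \in O) => //.
- exact: p_inj.
- by move=> E; move: (indep_pair IF aF aO); rewrite E bF.
- by move=> E; move: (indep_pair IF bF bO); rewrite -E aF.
Qed.

Lemma cdim_Ind : cdim (Ind e) = d.
Proof.
apply/eqP; rewrite eqn_leq; apply/andP; split.
  by apply/bigmax_leqP => A; rewrite inE; apply: face_le.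
rewrite /d /cdim; apply: (@leq_bigmax_cond _ (fun A => A \in Ind e) (fun A : {set T} => #|A|) (~: O)).
by rewrite inE; apply/indepP => x y; rewrite !inE; apply: nOnO.
Qed.

Lemma fibre (A : {set T}) i : A \in IO ->
  #|[set F in Ind e | (#|F| == i) && (F :&: O == A)]| =
  'C(d - #|A|, i - #|A|) * (#|A| <= i).
Proof.
rewrite !inE => /andP [IA AO].
case: (leqP #|A| i) => Ai; last first.
  rewrite muln0; apply/eqP; rewrite cards_eq0; apply/eqP/setP => F.
  rewrite !inE; apply/negbTE; apply/negP => /and3P [_ /eqP Fi /eqP FA].
  have : #|A| <= #|F| by rewrite -FA; apply: subset_leq_card; apply: subsetIl.
  by rewrite Fi leqNgt Ai.
rewrite muln1.
pose W := ~: O :\: p @: A.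
have cW : #|W| = d - #|A|.
  rewrite /W cardsD /d; congr (_ - _).
  have -> : ~: O :&: p @: A = p @: A.
    apply/setIidPr/subsetP => y /imsetP [a aA ->].
    by rewrite inE pO negbK (subsetP AO).
  by rewrite card_imset //; apply: p_inj.
rewrite -cW -cards_draws.
have -> : [set F in Ind e | (#|F| == i) && (F :&: O == A)] =
          (fun B : {set T} => A :|: B) @: [set B : {set T} | B \subset W & #|B| == i - #|A|].
  apply/setP => F; rewrite !inE; apply/idP/imsetP.
    case/and3P => IF /eqP Fi /eqP FA.
    exists (F :\: O).
      rewrite inE; apply/andP; split.
        apply/subsetP => y; rewrite !inE => /andP [yO yF]; rewrite yO andbT.
        apply/imsetP => [[a aA E]].
        have aF : a \in F by move: aA; rewrite -FA inE => /andP [].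
        by move: (indep_pair IF aF (subsetP AO a aA)); rewrite -E yF.
      by rewrite -Fi -FA -(cardsID O F) addKn.
    by rewrite -FA setID.
  case=> B; rewrite inE => /andP [BW /eqP cB] ->.
  have BO : forall y, y \in B -> y \notin O.
    by move=> y /(subsetP BW); rewrite !inE => /andP [_ ->].
  have BpA : forall y, y \in B -> y \notin p @: A.
    by move=> y /(subsetP BW); rewrite !inE => /andP [].
  have dj : A :&: B = set0.
    apply/setP => y; rewrite !inE; apply/negbTE; apply/negP => /andP [yA yB].
    by move: (BO y yB); rewrite (subsetP AO y yA).
  apply/and3P; split.
  - have H1 : forall a b, a \in A -> b \in B -> ~~ e a b.
      move=> a b aA bB; rewrite e_sym ne ?BO //; apply/negP => /eqP E.
      by move: (BpA b bB); rewrite -[b]pK -E imset_f.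
    apply/indepP => x y; rewrite !inE => /orP [xA | xB] /orP [yA | yB].
    + by move/indepP: IA; apply.
    + exact: H1.
    + by rewrite e_sym; apply: H1.
    + by apply: nOnO; apply: BO.
  - by rewrite cardsU dj cards0 subn0 cB subnKC.
  - rewrite setIUl (setIidPl AO); apply/eqP; rewrite -[RHS]setU0; congr (_ :|: _).
    by apply/setP => y; rewrite !inE; case yB: (y \in B); rewrite ?andbF // (negbTE (BO y yB)).
apply: card_in_imset => B1 B2; rewrite !inE => /andP [B1W _] /andP [B2W _] E.
have key : forall B : {set T}, B \subset W -> B = (A :|: B) :\: O.
  move=> B BW; apply/setP => y; rewrite !inE.
  case yB: (y \in B); rewrite ?orbT ?orbF.
    by move: (subsetP BW y yB); rewrite !inE => /andP [_ ->].
  by case yA: (y \in A); rewrite ?(subsetP AO y yA) ?andbF.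
by rewrite (key _ B1W) (key _ B2W) E.
Qed.


Lemma sub_indep (A B : {set T}) : independent e B -> A \subset B -> independent e A.
Proof.
move=> IB AB; apply/indepP => x y xA yA.
by move/indepP: IB; apply; apply: (subsetP AB).
Qed.

Lemma nfaces_sum i : nfaces (Ind e) i = \sum_(A in IO) 'C(d - #|A|, i - #|A|) * (#|A| <= i).
Proof.
rewrite /nfaces -sum1_card (partition_big (fun F => F :&: O) (mem IO)).
  apply: eq_bigr => A AIO; rewrite -(fibre i AIO) -sum1_card.
  by apply: eq_bigl => F; rewrite !inE andbA.
move=> F; rewrite !inE => /andP [IF _].
by rewrite subsetIr andbT; apply: sub_indep IF (subsetIl _ _).
Qed.

Lemma h_Ind : h_vector (Ind e) = [seq Posz #|[set A in IO | #|A| == j]| | j <- iota 0 d.+1].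
Proof.
rewrite /h_vector cdim_Ind; apply/eq_in_map => j; rewrite mem_iota add0n ltnS => jd /=.
transitivity (\sum_(i < j.+1) \sum_(A in IO) ((-1) ^+ (j - i) * ('C(d - i, j - i))%:Z *
                 ('C(d - #|A|, i - #|A|) * (#|A| <= i))%:Z))%R.
  apply: eq_bigr => i _; rewrite nfaces_sum (big_morph Posz PoszD (erefl _)) mulr_sumr.
  by [].
rewrite exchange_big /=.
transitivity (\sum_(A in IO) ((j == #|A|)%:Z))%R.
  apply: eq_bigr => A; rewrite !inE => /andP [IA _]; apply: binv => //.
  exact: face_le.
rewrite -sum1_card (big_morph Posz PoszD (erefl _)) [RHS]big_mkcond [LHS]big_mkcond /=.
by apply: eq_bigr => A _; rewrite !inE eq_sym; case: (_ && _); case: (_ == _).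
Qed.

End Whisker.

Section Inst.
Variables (n : nat) (G : rel 'I_n).
Hypothesis Gs : simple_graph G.

Lemma sl (a : 'I_n) : split (lshift n a) = inl a. Proof. exact: (unsplitK (inl a)). Qed.
Lemma sr (a : 'I_n) : split (rshift n a) = inr a. Proof. exact: (unsplitK (inr a)). Qed.

Lemma all_split (P : 'I_(n + n) -> Prop) :
  (forall a, P (lshift n a)) -> (forall a, P (rshift n a)) -> forall x, P x.
Proof. by move=> H1 H2 x; rewrite -(splitK x); case: (split x) => a; [apply: H1 | apply: H2]. Qed.

Definition pw (x : 'I_(n + n)) : 'I_(n + n) :=
  match split x with inl a => rshift n a | inr a => lshift n a end.
Definition Ow : {set 'I_(n + n)} := [set lshift n a | a in 'I_n].
Definition Hw (x y : 'I_(n + n)) : bool :=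
  match split x, split y with
  | inl a, inl b => G a b
  | inl a, inr b => a == b
  | inr a, inl b => a == b
  | inr _, inr _ => false
  end.

Lemma inOl a : lshift n a \in Ow. Proof. exact: imset_f. Qed.
Lemma inOr a : (rshift n a \in Ow) = false.
Proof. by apply/negbTE/imsetP => [[b _ /eqP]]; rewrite eq_rlshift. Qed.

Lemma Hw_irr : irreflexive Hw.
Proof.
case: Gs => Girr _.
by apply: all_split => a; rewrite /Hw ?sl ?sr // Girr.
Qed.

Lemma Hw_sym : symmetric Hw.
Proof.
case: Gs => _ Gsym.
move=> x y; move: x; apply: all_split => a; move: y; apply: all_split => b;
  by rewrite /Hw ?sl ?sr // ?Gsym // eq_sym.
Qed.

Lemma pwK : involutive pw.
Proof. by apply: all_split => a; rewrite /pw ?sl ?sr ?sl ?sr. Qed.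

Lemma pwO x : (pw x \in Ow) = (x \notin Ow).
Proof. by move: x; apply: all_split => a; rewrite /pw ?sl ?sr ?inOl ?inOr. Qed.

Lemma pwe x : x \in Ow -> forall y, Hw (pw x) y = (y == x).
Proof.
move: x; apply: all_split => a; rewrite ?inOr // => _ y; move: y.
apply: all_split => b; rewrite /pw /Hw ?sl ?sr.
  by rewrite (eq_shift.1.1.1) eq_sym.
by rewrite eq_rlshift.
Qed.

Lemma cardnO : #|~: Ow| = n.
Proof.
have -> : ~: Ow = [set rshift n a | a in 'I_n].
  apply/setP; apply: all_split => a; rewrite inE ?inOl ?inOr /=.
    by apply/esym/negbTE/imsetP => [[b _ /eqP]]; rewrite eq_lrshift.
  by rewrite imset_f.
by rewrite card_imset ?card_ord //; apply: rshift_inj.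
Qed.

Lemma gcount j :
  #|[set A in IO Hw Ow | #|A| == j]| = nfaces (Ind G) j.
Proof.
case: Gs => Girr Gsym.
rewrite /nfaces -(card_imset _ (imset_inj (@lshift_inj n n))).
apply: eq_card => A; rewrite !inE; apply/idP/imsetP.
  case/andP => /andP [IA AO] /eqP Aj.
  have EA : A = [set lshift n a | a in [set a | lshift n a \in A]].
    apply/setP => x; apply/idP/imsetP.
      move=> xA; have := subsetP AO x xA; case/imsetP => a _ E.
      by exists a; rewrite // inE -E.
    by case=> a; rewrite inE => aA ->.
  exists [set a | lshift n a \in A].
    rewrite !inE; apply/andP; split.
      apply/forall_inP => a; rewrite inE => aA; apply/forall_inP => b; rewrite inE => bA.
      by move/forall_inP: IA => /(_ _ aA) /forall_inP /(_ _ bA); rewrite /Hw !sl.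
    rewrite -Aj; apply/eqP/esym.
    by rewrite {1}EA card_imset //; apply: lshift_inj.
  exact: EA.
case=> B; rewrite !inE => /andP [IB /eqP Bj] ->.
rewrite card_imset; last by apply: lshift_inj.
rewrite Bj eqxx andbT; apply/andP; split.
  apply/forall_inP => x /imsetP [a aB ->]; apply/forall_inP => y /imsetP [b bB ->].
  by rewrite /Hw !sl; move/forall_inP: IB => /(_ _ aB) /forall_inP /(_ _ bB).
by apply/subsetP => x /imsetP [a _ ->]; apply: inOl.
Qed.

End Inst.

Lemma strip0_pad (s : seq nat) x r : 0 < x ->
  strip0 (map Posz (rcons s x ++ nseq r 0)) = map Posz (rcons s x).
Proof.
move=> x0; rewrite /strip0 map_cat map_nseq rev_cat rev_nseq find_cat has_nseq andbF.
rewrite size_nseq map_rcons rev_rcons /= ifT; last by rewrite -lt0n.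
by rewrite addn0 drop_size_cat ?size_nseq // rev_cons revK.
Qed.

Theorem corollary4p15 (n : nat) (G : rel 'I_n) :
  simple_graph G -> bipartite G ->
  exists (m : nat) (H : rel 'I_m),
    [/\ simple_graph H, bipartite H,
        vertex_decomposable (Ind H) &
        strip0 (h_vector (Ind H)) = map Posz (face_vector (Ind G))].
Proof.
move=> Gs [cG HcG].
have Hirr := Hw_irr Gs; have Hsym := Hw_sym Gs.
have HpK := @pwK n; have HpO := @pwO n; have Hpe := @pwe n G.
exists (n + n), (Hw G); split.
- by split.
- exists (fun x => match split x with inl a => cG a | inr a => ~~ cG a end).
  move=> x y; move: x; apply: all_split => a; move: y; apply: all_split => b;
    rewrite /Hw ?sl ?sr //.
  + exact: HcG.
  + by move/eqP->; case: (cG b).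
  + by move/eqP->; case: (cG b).
- exact: (vd_Ind Hirr Hsym HpK HpO Hpe).
rewrite (h_Ind Hsym HpK HpO Hpe) /d cardnO.
have -> : [seq Posz #|[set A in IO (Hw G) (Ow n) | #|A| == j]| | j <- iota 0 n.+1] =
          map Posz (map (nfaces (Ind G)) (iota 0 n.+1)).
  by rewrite -map_comp; apply/eq_map => j /=; rewrite gcount.
set c := cdim (Ind G).
have cmax : forall A, A \in Ind G -> #|A| <= c.
  by move=> A AI; apply: (@leq_bigmax_cond _ (fun A => A \in Ind G) (fun A : {set 'I_n} => #|A|)).
have [A0 A0I A0c] : {A0 | A0 \in Ind G & c = #|A0|}.
  apply: eq_bigmax_cond; apply/card_gt0P; exists set0.
  by rewrite inE; apply/forall_inP => x; rewrite inE.
have cn : c <= n by rewrite A0c; apply: leq_trans (max_card _) _; rewrite card_ord.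
have -> : iota 0 n.+1 = rcons (iota 0 c) c ++ iota c.+1 (n - c).
  by rewrite -cats1 -catA /= (_ : c :: _ = iota (0 + c) (n - c).+1) // -iotaD addnS subnKC.
rewrite map_cat.
have -> : map (nfaces (Ind G)) (iota c.+1 (n - c)) = nseq (n - c) 0.
  have Z : forall k, k \in iota c.+1 (n - c) -> nfaces (Ind G) k = 0.
    move=> k; rewrite mem_iota => /andP [ck _]; apply/eqP; rewrite cards_eq0; apply/eqP/setP => A.
    rewrite !inE; apply/negbTE/negP => /andP [AI /eqP Ak].
    by move: (cmax A); rewrite inE AI Ak leqNgt ck => /(_ isT).
  rewrite -{2}[n - c](size_iota c.+1); move: Z; elim: (iota _ _) => //= k s IH Z.
  by rewrite Z ?mem_head // IH // => k' k's; apply: Z; rewrite inE k's orbT.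
rewrite map_rcons strip0_pad.
  by rewrite /face_vector -/c -map_rcons -cats1 -[c.+1]addn1 iotaD add0n.
apply/card_gt0P; exists A0; rewrite !inE -A0c eqxx andbT.
by move: A0I; rewrite inE.
Qed.
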